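(* Let $(a_n)_{n\ge1}$ be an integer sequence such that $(na_n)_{n\ge1}$ is an Euler sequence. Then $(na_n)_{n\ge1}$ is an Euler–Gauss sequence. Moreover, for an integer sequence $(b_n)_{n\ge1}$, the sequence $(nb_n)_{n\ge1}$ is a Gauss sequence if and only if $b_n=0$ for all $n\ge1$.
   Context: $\mu$ is the Möbius function. An Euler sequence is an integer sequence $(c_n)$ with $c_{p^r}\equiv c_{p^{r-1}}\pmod{p^r}$ for all primes $p$ and integers $r\ge1$. For an integer sequence $(c_n)$ and $n\ge1$, $C_n^+=\prod_{d\mid n,\ \mu(d)=1} c_{n/d}$ and $C_n^-=\prod_{d\mid n,\ \mu(d)=-1} c_{n/d}$ (empty products equal $1$); $(c_n)$ is an Euler–Gauss sequence if $C_n^+\equiv C_n^-\pmod n$ for all $n\ge1$, and a Gauss sequence if $\sum_{d\mid n}\mu(d)c_{n/d}\equiv0\pmod n$ for all $n\ge1$. *)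

(* Defs.v *)
From mathcomp Require Import all_boot all_order all_algebra.
Set Implicit Arguments. Unset Strict Implicit. Unset Printing Implicit Defensive.
Import Order.TTheory GRing.Theory Num.Theory.
Local Open Scope ring_scope.

Definition moebius (n : nat) : int :=
  if (n == 0)%N then 0
  else if all (fun p => (logn p n <= 1)%N) (primes n)
       then (-1) ^+ size (primes n) else 0.

(* Integer sequences are functions nat -> int; index 0 is ignored. *)
Definition euler_seq (c : nat -> int) : Prop :=
  forall p r : nat, prime p -> (0 < r)%N ->
    (c (p ^ r)%N == c (p ^ r.-1)%N %[mod (p ^ r)%N])%Z.

Definition Cplus (c : nat -> int) (n : nat) : int :=
  \prod_(d <- divisors n | moebius d == 1) c (n %/ d)%N.

Definition Cminus (c : nat -> int) (n : nat) : int :=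
  \prod_(d <- divisors n | moebius d == -1) c (n %/ d)%N.

Definition euler_gauss_seq (c : nat -> int) : Prop :=
  forall n : nat, (0 < n)%N -> (Cplus c n == Cminus c n %[mod n])%Z.

Definition gauss_seq (c : nat -> int) : Prop :=
  forall n : nat, (0 < n)%N ->
    (n%:Z %| \sum_(d <- divisors n) moebius d * c (n %/ d)%N)%Z.

(* Main.v *)
Require Import Defs.
From mathcomp Require Import all_boot all_order all_algebra.
From mathcomp Require Import ring.
Import Order.TTheory GRing.Theory Num.Theory.
Local Open Scope ring_scope.

Lemma mu_pk p k : prime p ->
  moebius (p ^ k) = if k == 0%N then 1 else if k == 1%N then -1 else 0.
Proof.
move=> pp; case: k => [|k]; first by rewrite expn0.
rewrite /moebius expn_eq0 (gtn_eqF (prime_gt0 pp)) /= primesX // primes_prime //=.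
rewrite pfactorK // andbT; case: k => [|k] //=.
Qed.

Lemma mu1 : moebius 1 = 1.
Proof. by rewrite -(expn0 2) mu_pk. Qed.

Lemma mup p : prime p -> moebius p = -1.
Proof. by move=> pp; rewrite -(expn1 p) mu_pk. Qed.

Lemma pp_case (c : nat -> int) p r : prime p -> (0 < r)%N ->
  Cplus c (p ^ r) = c (p ^ r)%N /\ Cminus c (p ^ r) = c (p ^ r.-1)%N.
Proof.
move=> pp r0.
have n0 : (0 < p ^ r)%N by rewrite expn_gt0 prime_gt0.
have dv d : d \in divisors (p ^ r) -> exists2 k, (k <= r)%N & d = (p ^ k)%N.
  by rewrite -dvdn_divisors // => /(dvdn_pfactor _ _ pp).
split.
- rewrite /Cplus big_mkcond (bigD1_seq 1%N) ?divisors_uniq -?dvdn_divisors ?dvd1n //=.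
  rewrite ?mu1 ?eqxx divn1 big1_seq ?mulr1 // => i /andP [ni1 /dv [k _ ik]].
  move: ni1; rewrite ik mu_pk //; case: k {ik} => [|[|k]] //=; by rewrite expn0 eqxx.
- rewrite /Cminus big_mkcond (bigD1_seq p) ?divisors_uniq -?dvdn_divisors ?dvdn_exp //=.
  rewrite ?mup // ?eqxx big1_seq ?mulr1.
    by clear dv n0; case: r r0 => // r _; rewrite expnS mulKn ?prime_gt0.
  move=> i /andP [ni1 /dv [k _ ik]].
  move: ni1; rewrite ik mu_pk //; case: k {ik} => [|[|k]] //=; by rewrite expn1 eqxx.
Qed.

Lemma two_primes (a : nat -> int) n p q : (0 < n)%N -> prime p -> prime q ->
  p != q -> (p %| n)%N -> (q %| n)%N ->
  (n%:Z %| Cplus (fun k => k%:Z * a k) n)%Z /\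
  (n%:Z %| Cminus (fun k => k%:Z * a k) n)%Z.
Proof.
move=> n0 pp pq npq pn qn; split.
  rewrite /Cplus big_mkcond (bigD1_seq 1%N) ?divisors_uniq -?dvdn_divisors ?dvd1n //=.
  by rewrite ?mu1 ?eqxx divn1; apply/dvdz_mulr/dvdz_mulr/dvdzz.
rewrite /Cminus big_mkcond (bigD1_seq p) ?divisors_uniq -?dvdn_divisors //=.
rewrite big_mkcond (bigD1_seq q) ?divisors_uniq -?dvdn_divisors //=.
rewrite (eq_sym q p) npq /= ?mup // ?eqxx.
have cpq : coprime p q by rewrite prime_coprime // dvdn_prime2 // (negbTE npq).
have : (p * q %| n)%N by rewrite Gauss_dvd // pn qn.
case/dvdnP => k nk.
have -> : (n %/ p = k * q)%N by rewrite nk mulnA mulnAC mulnK // prime_gt0.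
have -> : (n %/ q = k * p)%N by rewrite nk mulnA mulnK // prime_gt0.
set X := \prod_(_ <- _ | _) _.
have -> : (k * q)%:Z * a (k * q)%N * ((k * p)%:Z * a (k * p)%N * X) =
  ((k * q) * (k * p))%N%:Z * (a (k * q)%N * a (k * p)%N * X).
  by rewrite PoszM [in RHS]PoszM; ring.
apply: dvdz_mulr; rewrite dvdzE /= nk.
by apply/dvdnP; exists k; ring.
Qed.

Lemma part1 (a : nat -> int) : euler_seq (fun n => n%:Z * a n) ->
      euler_gauss_seq (fun n => n%:Z * a n).
Proof.
move=> E n n0.
have [->|n1] := eqVneq n 1%N; first by rewrite eqz_mod_dvd dvdzE dvd1n.
have n1' : (1 < n)%N by rewrite ltn_neqAle eq_sym n1 n0.
have pp := pdiv_prime n1'; have pn := pdiv_dvd n.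
set p := pdiv n in pp pn.
have [m cpm nE] := pfactor_coprime pp n0.
have r0 : (0 < logn p n)%N by rewrite logn_gt0 mem_primes pp n0 pn.
have [m1|m1] := eqVneq m 1%N.
  move: nE r0; rewrite m1 mul1n; set r := logn p n => -> r0.
  have [-> ->] := pp_case (fun n => n%:Z * a n) p r pp r0.
  exact: E.
have m0 : (0 < m)%N by move: n0; rewrite nE muln_gt0 => /andP [].
have m1' : (1 < m)%N by rewrite ltn_neqAle eq_sym m1 m0.
have pq := pdiv_prime m1'; have qm := pdiv_dvd m.
set q := pdiv m in pq qm.
have qn : (q %| n)%N by rewrite nE dvdn_mulr.
have npq : p != q.
  apply/eqP => epq; move: cpm; rewrite prime_coprime // epq qm //.
have [h1 h2] := two_primes a n p q n0 pp pq npq pn qn.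
by rewrite eqz_mod_dvd rpredB.
Qed.

Lemma part2 (b : nat -> int) :
  gauss_seq (fun n => n%:Z * b n) <-> (forall n : nat, (0 < n)%N -> b n = 0).
Proof.
split => [G | Z n n0]; last first.
  rewrite big_seq big1 ?dvdz0 // => d; rewrite -dvdn_divisors // => dn.
  have d0 : (0 < d)%N by apply: dvdn_gt0 n0 dn.
  by rewrite Z ?mulr0 // divn_gt0 // dvdn_leq.
elim/ltn_ind => m IH m0.
set x := m%:Z * b m.
have [p xp pp] := prime_above `|x|%N.
have p0 := prime_gt0 pp.
have mp0 : (0 < m * p)%N by rewrite muln_gt0 m0.
have := G _ mp0.
rewrite (bigD1_seq p) ?divisors_uniq -?dvdn_divisors ?dvdn_mull //=.
move=> H.
have H1 : (p%:Z %| (m * p)%N%:Z)%Z by rewrite dvdzE /= dvdn_mull.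
have H2 := dvdz_trans H1 H.
have hr : (p%:Z %| \sum_(i <- divisors (m * p) | i != p)
     moebius i * ((m * p %/ i)%N%:Z * b (m * p %/ i)%N))%Z.
  rewrite big_seq_cond; apply: rpred_sum => d /andP [dr dp].
  move: dr; rewrite -dvdn_divisors // => dmp.
  have [pk|npk] := boolP (p %| m * p %/ d)%N.
    by apply/dvdz_mull/dvdz_mulr; rewrite dvdzE.
  have d0 : (0 < d)%N by apply: dvdn_gt0 mp0 dmp.
  have e : (m * p = d * (m * p %/ d))%N by rewrite [RHS]mulnC divnK.
  have : (p %| d)%N.
    have : (p %| d * (m * p %/ d))%N by rewrite -e dvdn_mull.
    by rewrite Euclid_dvdM // (negbTE npk) orbF.
  case/dvdnP => d' dE.
  set k := (m * p %/ d)%N in npk e *.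
  have e' : m = (d' * k)%N.
    by apply/eqP; rewrite -(eqn_pmul2r p0) e dE mulnAC.
  have d'1 : d' != 1%N by apply: contraNneq dp => e1; rewrite dE e1 mul1n.
  have k0 : (0 < k)%N by move: m0; rewrite e' muln_gt0 => /andP [].
  have d'0 : (0 < d')%N by move: m0; rewrite e' muln_gt0 => /andP [].
  have km : (k < m)%N.
    rewrite e' -{1}(mul1n k) ltn_pmul2r // ltn_neqAle eq_sym d'1 d'0 //.
  by rewrite IH // mulr0 mulr0 dvdz0.
have hp := rpredB H2 hr.
rewrite addrK mup // mulnK // mulN1r rpredN in hp.
have [x0|xn0] := eqVneq x 0.
  by move/eqP: x0; rewrite mulf_eq0 => /orP [|/eqP //]; rewrite -[0]/(Posz 0) eqz_nat gtn_eqF.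
move: hp; rewrite dvdzE /= => /dvdn_leq; rewrite absz_gt0 xn0 => /(_ isT).
by rewrite leqNgt xp.
Qed.

Theorem theorem4 :
  (forall a : nat -> int,
      euler_seq (fun n => n%:Z * a n) ->
      euler_gauss_seq (fun n => n%:Z * a n)) /\
  (forall b : nat -> int,
      gauss_seq (fun n => n%:Z * b n) <-> (forall n : nat, (0 < n)%N -> b n = 0)).
Proof. split; [exact: part1 | exact: part2]. Qed.
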